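(* For all $m,n\ge 3$, the state complexity of $(V_m(a,b,c,d))^R\,V_n(d,c,b,a)$ is $3\cdot 2^{m+n-2}$.
   Context: The state complexity of a regular language is the number of states of its minimal complete DFA. For $n\ge 3$, $\mathcal{V}_n(a,b,c,d)$ is the DFA over $\{a,b,c,d\}$ with states $\{0,\dots,n-1\}$, initial state $0$, final states $\{n-1\}$, where $a$ maps $i\mapsto i+1\pmod n$; $b$ swaps $n-2$ and $n-1$ fixing other states; $c$ maps $n-1$ to $n-2$ fixing other states; $d$ is the identity. $V_n(a,b,c,d)$ is its language. $V_n(d,c,b,a)$ is the language of the DFA obtained by renaming letters: same states, initial state $0$, final states $\{n-1\}$, where $d$ maps $i\mapsto i+1\pmod n$, $c$ swaps $n-2$ and $n-1$, $b$ maps $n-1$ to $n-2$ fixing others, and $a$ is the identity. $L^R$ is the reversal of $L$, and $KL$ is concatenation. *)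

(* Defs.v *)
From mathcomp Require Import all_boot.
Set Implicit Arguments. Unset Strict Implicit. Unset Printing Implicit Defensive.

Inductive letter := La | Lb | Lc | Ld.

Definition word := seq letter.
Definition language := word -> Prop.

Definition lang_rev (L : language) : language := fun w => L (rev w).
Definition lang_cat (K L : language) : language :=
  fun w => exists u v, w = u ++ v /\ K u /\ L v.

Definition recognizable_with (k : nat) (L : language) : Prop :=
  exists (delta : 'I_k -> letter -> 'I_k) (s : 'I_k) (F : pred 'I_k),
    forall w : word, L w <-> F (foldl delta s w).

Definition state_complexity (L : language) (k : nat) : Prop :=
  recognizable_with k L /\ forall j, j < k -> ~ recognizable_with j L.

Definition rot (n q : nat) : nat := q.+1 %% n.
Definition swp (n q : nat) : nat :=
  if q == n - 2 then n - 1 else if q == n - 1 then n - 2 else q.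
Definition mp (n q : nat) : nat := if q == n - 1 then n - 2 else q.

Definition Vabcd_step (n : nat) (q : nat) (l : letter) : nat :=
  match l with La => rot n q | Lb => swp n q | Lc => mp n q | Ld => q end.
Definition Vdcba_step (n : nat) (q : nat) (l : letter) : nat :=
  match l with Ld => rot n q | Lc => swp n q | Lb => mp n q | La => q end.

Definition V_abcd (n : nat) : language :=
  fun w => foldl (Vabcd_step n) 0 w = n - 1.
Definition V_dcba (n : nat) : language :=
  fun w => foldl (Vdcba_step n) 0 w = n - 1.

(* Main.v *)
Require Import Defs.
From mathcomp Require Import all_boot.
From mathcomp Require Import zify.
Set Implicit Arguments. Unset Strict Implicit. Unset Printing Implicit Defensive.

Lemma rotE k q : q < k -> Defs.rot k q = if q == k.-1 then 0 else q.+1.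
Proof.
move=> lt; rewrite /Defs.rot; case: ifP => /eqP H.
  by rewrite (_ : q.+1 = k) ?modnn //; lia.
by rewrite modn_small //; lia.
Qed.

Lemma step_ltA k q x : 2 <= k -> q < k -> Vabcd_step k q x < k.
Proof.
move=> hk hq; case: x => /=; rewrite ?rotE ?/swp ?/mp //;
  repeat case: ifP => //; lia.
Qed.
Lemma step_ltB k q x : 2 <= k -> q < k -> Vdcba_step k q x < k.
Proof.
move=> hk hq; case: x => /=; rewrite ?rotE ?/swp ?/mp //;
  repeat case: ifP => //; lia.
Qed.
From Stdlib Require Import IndefiniteDescription.

Lemma recog_fin (Q : finType) (k : nat) (L : language) (delta : Q -> letter -> Q)
  (s : Q) (F : pred Q) :
  #|Q| = k -> (forall w, L w <-> F (foldl delta s w)) -> recognizable_with k L.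
Proof.
move=> <- HL.
exists (fun i x => enum_rank (delta (enum_val i) x)), (enum_rank s),
  (fun i => F (enum_val i)).
have E : forall w q, foldl (fun i x => enum_rank (delta (enum_val i) x)) (enum_rank q) w
   = enum_rank (foldl delta q w).
  by elim => [|x w IH] q //=; rewrite enum_rankK IH.
by move=> w; rewrite E enum_rankK.
Qed.

Lemma lower (X : finType) (L : language) (wd : X -> word) :
  (forall x y, x <> y -> exists z, ~ (L (wd x ++ z) <-> L (wd y ++ z))) ->
  forall j, j < #|X| -> ~ recognizable_with j L.
Proof.
move=> D j lt [delta [s [F HL]]].
pose f x := foldl delta s (wd x).
have inj : injective f.
  move=> x y E; case: (eqVneq x y) => // /eqP ne.
  case: (D x y ne) => z; rewrite !HL !foldl_cat.
  rewrite (_ : foldl delta s (wd x) = foldl delta s (wd y)) // => H; exfalso; exact: H.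
by have := leq_card f inj; rewrite card_ord leqNgt lt.
Qed.

Section Main.
Variables m' n' : nat.
Local Notation m := m'.+3.
Local Notation n := n'.+3.

Definition fA (x : letter) (q : 'I_m) : 'I_m := inord (Vabcd_step m q x).
Definition gB (x : letter) (t : 'I_n) : 'I_n := inord (Vdcba_step n t x).

Lemma val_fA x q : nat_of_ord (fA x q) = Vabcd_step m q x.
Proof. by rewrite inordK // step_ltA. Qed.
Lemma val_gB x t : nat_of_ord (gB x t) = Vdcba_step n t x.
Proof. by rewrite inordK // step_ltB. Qed.

Lemma fA_a q : nat_of_ord (fA La q) = if nat_of_ord q == m'.+2 then 0 else (nat_of_ord q).+1.
Proof. by rewrite val_fA /= rotE. Qed.
Lemma fA_b q : nat_of_ord (fA Lb q) =
  if nat_of_ord q == m'.+1 then m'.+2 else if nat_of_ord q == m'.+2 then m'.+1 else nat_of_ord q.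
Proof.
rewrite val_fA /= /swp; have := ltn_ord q; repeat case: ifP; lia.
Qed.
Lemma fA_c q : nat_of_ord (fA Lc q) = if nat_of_ord q == m'.+2 then m'.+1 else nat_of_ord q.
Proof. rewrite val_fA /= /mp; have := ltn_ord q; repeat case: ifP; lia. Qed.
Lemma fA_d q : fA Ld q = q.
Proof. by apply: val_inj => /=; rewrite val_fA. Qed.

Lemma gB_d t : nat_of_ord (gB Ld t) = if nat_of_ord t == n'.+2 then 0 else (nat_of_ord t).+1.
Proof. by rewrite val_gB /= rotE. Qed.
Lemma gB_c t : nat_of_ord (gB Lc t) =
  if nat_of_ord t == n'.+1 then n'.+2 else if nat_of_ord t == n'.+2 then n'.+1 else nat_of_ord t.
Proof.
rewrite val_gB /= /swp; have := ltn_ord t; repeat case: ifP; lia.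
Qed.
Lemma gB_b t : nat_of_ord (gB Lb t) = if nat_of_ord t == n'.+2 then n'.+1 else nat_of_ord t.
Proof. rewrite val_gB /= /mp; have := ltn_ord t; repeat case: ifP; lia. Qed.
Lemma gB_a t : gB La t = t.
Proof. by apply: val_inj => /=; rewrite val_gB. Qed.

Definition rinv (u : 'I_n) : 'I_n := inord (if nat_of_ord u == 0 then n'.+2 else (nat_of_ord u).-1).
Lemma val_rinv u : nat_of_ord (rinv u) = if nat_of_ord u == 0 then n'.+2 else (nat_of_ord u).-1.
Proof. rewrite inordK //; have := ltn_ord u; case: ifP; lia. Qed.

Lemma img_a (T : {set 'I_n}) : gB La @: T = T.
Proof.
apply/setP => u; apply/imsetP/idP => [[t tT ->]|uT]; first by rewrite gB_a.
by exists u; rewrite ?gB_a.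
Qed.

Lemma in_img_d (T : {set 'I_n}) u : (u \in gB Ld @: T) = (rinv u \in T).
Proof.
apply/imsetP/idP => [[t tT ->]|uT].
  suff -> : rinv (gB Ld t) = t by [].
  apply: val_inj => /=; rewrite val_rinv gB_d; have := ltn_ord t; repeat case: ifP; lia.
exists (rinv u) => //; apply: val_inj => /=; rewrite gB_d val_rinv.
have := ltn_ord u; repeat case: ifP; lia.
Qed.

Lemma gB_cK t : gB Lc (gB Lc t) = t.
Proof. apply: val_inj => /=; rewrite !gB_c; have := ltn_ord t; repeat case: ifP; lia. Qed.

Lemma in_img_c (T : {set 'I_n}) u : (u \in gB Lc @: T) = (gB Lc u \in T).
Proof.
apply/imsetP/idP => [[t tT ->]|uT]; first by rewrite gB_cK.
by exists (gB Lc u); rewrite ?gB_cK.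
Qed.

Lemma in_img_b (T : {set 'I_n}) u : (u \in gB Lb @: T) =
  (nat_of_ord u != n'.+2) && ((u \in T) || (nat_of_ord u == n'.+1) && (ord_max \in T)).
Proof.
apply/imsetP/idP => [[t tT ->]|].
  have := ltn_ord t; have := gB_b t; case: ifP => /eqP E G lt.
    have tm : t = ord_max by apply: val_inj.
    rewrite G -tm tT /=; apply/andP; split; [apply/eqP|apply/orP; right; apply/andP; split=> //]; lia.
  have -> : gB Lb t = t by apply: val_inj.
  by rewrite tT andbT; apply/eqP.
case/andP=> /eqP u1 /orP [uT|/andP [/eqP u2 mT]].
  by exists u => //; apply: val_inj => /=; rewrite gB_b; case: ifP => // /eqP.
exists ord_max => //; apply: val_inj => /=; rewrite gB_b /=; rewrite eqxx; lia.
Qed.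

Local Notation state := ({set 'I_m} * {set 'I_n})%type.
Definition stp (s : state) (x : letter) : state :=
  let S' := [set q | fA x q \in s.1] in
  (S', if ord0 \in S' then ord0 |: (gB x @: s.2) else gB x @: s.2).
Definition run := foldl stp.
Definition init : state := ([set ord_max], set0).

Lemma stp1 s x q : (q \in (stp s x).1) = (fA x q \in s.1).
Proof. by rewrite inE. Qed.
Lemma stp2 s x u : (u \in (stp s x).2) =
   (u \in gB x @: s.2) || ((u == ord0) && (ord0 \in (stp s x).1)).
Proof.
rewrite /stp /=; case: ifP => H.
  by rewrite in_setU1 orbC; case: (u == ord0); rewrite ?H.
by case: (u == ord0); rewrite ?orbF //= H orbF.
Qed.


Definition foldA (p : 'I_m) l := foldl (fun q x => fA x q) p l.
Definition foldB (t : 'I_n) l := foldl (fun q x => gB x q) t l.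

Lemma foldA_val l p : foldl (Vabcd_step m) (nat_of_ord p) l = foldA p l.
Proof. by elim: l p => [|x l IH] p //=; rewrite -val_fA IH. Qed.
Lemma foldB_val l p : foldl (Vdcba_step n) (nat_of_ord p) l = foldB p l.
Proof. by elim: l p => [|x l IH] p //=; rewrite -val_gB IH. Qed.

Lemma run_rcons s z x : run s (rcons z x) = stp (run s z) x.
Proof. by rewrite /run foldl_rcons. Qed.
Lemma run_cat s z1 z2 : run s (z1 ++ z2) = run (run s z1) z2.
Proof. by rewrite /run foldl_cat. Qed.

Lemma run1 s z p : (p \in (run s z).1) = (foldA p (rev z) \in s.1).
Proof.
elim/last_ind: z p => [|z x IH] p //.
by rewrite run_rcons stp1 IH rev_rcons.
Qed.

Lemma run2 s z t : t \in (run s z).2 <->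
  (exists2 t0, t0 \in s.2 & foldB t0 z = t) \/
  (exists z1 z2, [/\ z = z1 ++ z2, z1 <> [::], foldA ord0 (rev z1) \in s.1
                   & foldB ord0 z2 = t]).
Proof.
elim/last_ind: z t => [|z x IH] t.
  split; first by move=> H; left; exists t.
  case=> [[t0 H <-] //|[z1 [z2 [E ne _ _]]]].
  by case: z1 E ne => [|y z1] //= E; case: E.
rewrite run_rcons stp2; split.
  case/orP=> [/imsetP [t1 H1 ->]|/andP [/eqP -> H0]].
    case/IH: H1 => [[t0 H0 E]|[z1 [z2 [E ne H0 F]]]].
      by left; exists t0 => //; rewrite /foldB foldl_rcons -/(foldB t0 z) E.
    right; exists z1, (rcons z2 x); split => //; first by rewrite E rcons_cat.
    by rewrite /foldB foldl_rcons -/(foldB ord0 z2) F.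
  right; exists (rcons z x), [::]; split => //; first by rewrite cats0.
    by case: z {IH H0}.
  by rewrite stp1 run1 in H0; rewrite rev_rcons.
case=> [[t0 H0 <-]|[z1 [z2 [E ne H0 F]]]].
  apply/orP; left; apply/imsetP; exists (foldB t0 z); last first.
    by rewrite /foldB foldl_rcons.
  by apply/IH; left; exists t0.
case/lastP: z2 E F => [|z2 y] E F.
  rewrite cats0 in E; rewrite -E in H0; rewrite -F /=.
  by apply/orP; right; rewrite inE run1; rewrite rev_rcons in H0.
rewrite -rcons_cat in E; case/rcons_inj: E => Ez Ex; subst y.
apply/orP; left; apply/imsetP; exists (foldB ord0 z2); last first.
  by rewrite -F /foldB foldl_rcons.
by apply/IH; right; exists z1, z2.
Qed.

Definition Lang := lang_cat (lang_rev (V_abcd m)) (V_dcba n).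
Definition acc (s : state) := ord_max \in s.2.

Lemma correct w : Lang w <-> acc (run init w).
Proof.
rewrite /acc run2; split.
  case=> [u [v [-> [Hu Hv]]]]; right; exists u, v; split => //.
  - by move=> E; move: Hu; rewrite E /lang_rev /V_abcd /= subn1.
  - rewrite inE; apply/eqP/val_inj => /=.
    by move: Hu; rewrite /lang_rev /V_abcd -(foldA_val _ ord0) subn1.
  - apply/val_inj => /=.
    by move: Hv; rewrite /V_dcba -(foldB_val _ ord0) subn1.
case=> [[t0 //]|[u [v [E _ Hu Hv]]]]; first by rewrite inE.
exists u, v; split => //; split.
  rewrite /lang_rev /V_abcd (foldA_val _ ord0) subn1.
  by rewrite inE in Hu; rewrite (eqP Hu).
by rewrite /V_dcba (foldB_val _ ord0) subn1 Hv.
Qed.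


Lemma nseq_rcons (k : nat) (x : letter) : nseq k.+1 x = rcons (nseq k x) x.
Proof. by rewrite -cats1 -addn1 nseqD. Qed.

Lemma stp_d1 s : (stp s Ld).1 = s.1.
Proof. by apply/setP => q; rewrite stp1 fA_d. Qed.

Lemma runD s k : k <= n -> (run s (nseq k Ld)).1 = s.1 /\
  forall u, u \in (run s (nseq k Ld)).2 <->
   (exists2 t0, t0 \in s.2 & (t0 + k = u \/ t0 + k = u + n)) \/ (ord0 \in s.1 /\ u < k).
Proof.
elim: k => [|k IH] lek.
  split => // u; split => [H|]; first by left; exists u => //; left; rewrite addn0.
  case=> [[t0 T0 [E|E]]|[_ //]].
    by have -> : u = t0 by apply: val_inj => /=; rewrite -E addn0.
  by have := ltn_ord t0; lia.
have [S1 IH2] := IH (ltnW lek).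
rewrite nseq_rcons run_rcons stp_d1 S1; split => // u.
rewrite stp2 in_img_d stp_d1 S1.
move/(_ (rinv u)): IH2 => IHu.
have hu := ltn_ord u; have hr := val_rinv u.
split.
  case/orP => [/IHu [[t0 T0 E]|[S0 L]] | /andP [/eqP -> S0]].
  - left; exists t0 => //; have := ltn_ord t0; move: E hr; case: ifP; lia.
  - right; split => //; move: L hr; case: ifP; lia.
  - by right; split.
case => [[t0 T0 E]|[S0 L]].
  apply/orP; left; apply/IHu; left; exists t0 => //.
  have := ltn_ord t0; move: E hr; case: ifP; lia.
case: (eqVneq (nat_of_ord u) 0) => [u0|un0].
  have -> : u = ord0 by apply: val_inj.
  by apply/orP; right; rewrite eqxx S0.
apply/orP; left; apply/IHu; right; split => //.
move: L hr; case: ifP; lia.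
Qed.

Lemma accD s (t : 'I_n) : acc (run s (nseq (n'.+2 - t) Ld)) = (t \in s.2).
Proof.
have := ltn_ord t => ht.
have [_ H] := @runD s (n'.+2 - t) (leq_trans (leq_subr _ _) (leqnSn _)).
apply/idP/idP => [/H [[t0 T0 [E|E]]|[_ L]]|tT].
- by have -> : t = t0 by apply: val_inj => /=; move: E => /=; lia.
- by have := ltn_ord t0; move: E => /=; lia.
- by move: L => /=; lia.
by apply/H; left; exists t => //; left => /=; lia.
Qed.

Definition rotS k (S : {set 'I_m}) := [set q : 'I_m | inord ((q + k) %% m) \in S].

Lemma rotS_comp a b S : rotS a (rotS b S) = rotS (a + b) S.
Proof.
apply/setP => q; rewrite !inE inordK ?ltn_pmod //.
by rewrite modnDml addnA.
Qed.

Lemma rotS_m S : rotS m S = S.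
Proof. by apply/setP => q; rewrite inE modnDr modn_small // inord_val. Qed.

Lemma rotS0 S : rotS 0 S = S.
Proof. by apply/setP => q; rewrite inE addn0 modn_small // inord_val. Qed.

Lemma stp_a1 s : (stp s La).1 = rotS 1 s.1.
Proof. by apply/setP => q; rewrite stp1 inE /fA /= /Defs.rot addn1. Qed.

Lemma runA1 (s : state) (k : nat) : (run s (nseq k La)).1 = rotS k s.1.
Proof.
elim: k s => [|k IH] s; first by rewrite rotS0.
by rewrite /= -/(run _ _) IH stp_a1 rotS_comp addn1.
Qed.

Lemma stp_a2 s : (stp s La).2 = if ord0 \in (stp s La).1 then ord0 |: s.2 else s.2.
Proof. by rewrite /= img_a. Qed.

Lemma runA2 (s : state) (k : nat) (u : 'I_n) : (u \in s.2 -> u \in (run s (nseq k La)).2) /\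
   (u \in (run s (nseq k La)).2 -> (u == ord0) || (u \in s.2)).
Proof.
elim: k s => [|k IH] s; first by split => // ->; rewrite orbT.
rewrite /= -/(run _ _); have [H1 H2] := IH (stp s La).
rewrite stp_a2 in H1 H2; case: ifP => _ in H1 H2.
  split => [uT|/H2]; first by apply: H1; rewrite in_setU1 uT orbT.
  by rewrite in_setU1 orbA orbb.
by split.
Qed.

Lemma valid_stp s x : ord0 \in (stp s x).1 -> ord0 \in (stp s x).2.
Proof. by move=> H; rewrite stp2 eqxx H orbT. Qed.

Lemma runA_add (s : state) (k i : nat) : 0 < i <= k -> ord0 \in rotS i s.1 ->
  (run s (nseq k La)).2 = ord0 |: s.2.
Proof.
move=> /andP [i0 ik] H.
have E : nseq k La = nseq i La ++ nseq (k - i) La by rewrite -nseqD subnKC.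
have H0 : ord0 \in (run s (nseq i La)).2.
  rewrite -(prednK i0) nseq_rcons run_rcons; apply: valid_stp.
  by rewrite -run_rcons -nseq_rcons prednK // runA1.
apply/setP => u; rewrite in_setU1 E run_cat; apply/idP/idP => H1.
  have [_ Hb] := runA2 (run s (nseq i La)) (k - i) u.
  have [_ Ha] := runA2 s i u.
  by case/orP: (Hb H1) => [->//|/Ha].
have [Hb _] := runA2 (run s (nseq i La)) (k - i) u.
have [Ha _] := runA2 s i u.
by apply: Hb; case/orP: H1 => [/eqP ->|/Ha].
Qed.


Lemma accS s (p : 'I_m) : acc (run s (nseq p La ++ Lb :: nseq n Ld)) = (p \in s.1).
Proof.
set s1 := run s (nseq p La); set s2 := stp s1 Lb.
have -> : run s (nseq p La ++ Lb :: nseq n Ld) = run s2 (nseq n Ld) by rewrite run_cat.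
have S2 : (ord0 \in s2.1) = (p \in s.1).
  rewrite stp1; have -> : fA Lb ord0 = ord0 by apply: val_inj => /=; rewrite fA_b.
  by rewrite /s1 runA1 inE add0n modn_small // inord_val.
have M2 : ord_max \notin s2.2.
  by rewrite stp2 in_img_b /= eqxx.
have [_ H] := @runD s2 n (leqnn _).
apply/idP/idP => [/H [[t0 T0 [E|E]]|[S0 _]]|pS].
- by have := ltn_ord t0; move: E => /=; lia.
- have tm : t0 = ord_max by apply: val_inj => /=; move: E => /=; lia.
  by rewrite -tm T0 in M2.
- by rewrite -S2.
by apply/H; right; split; [rewrite S2 | rewrite /=].
Qed.

Lemma distinguish (s s' : state) : s <> s' ->
  exists z, acc (run s z) <> acc (run s' z).
Proof.
case: s s' => [S T] [S' T'] ne.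
case: (eqVneq T T') => [ET|NT].
  have NS : S != S' by apply/eqP => ES; apply: ne; rewrite ES ET.
  have [p Hp] : exists p, (p \in S) != (p \in S').
    apply/existsP; apply: contraNT NS => /existsPn H.
    by apply/eqP/setP => p; apply/eqP/negPn; exact: H.
  by exists (nseq p La ++ Lb :: nseq n Ld); rewrite !accS; apply/eqP.
have [t Ht] : exists t, (t \in T) != (t \in T').
  apply/existsP; apply: contraNT NT => /existsPn H.
  by apply/eqP/setP => p; apply/eqP/negPn; exact: H.
by exists (nseq (n'.+2 - t) Ld); rewrite !accD; apply/eqP.
Qed.


Definition reach (s : state) := exists w, run init w = s.

Lemma reach_run s z : reach s -> reach (run s z).
Proof. by case=> w <-; exists (w ++ z); rewrite run_cat. Qed.
Lemma reach_stp s x : reach s -> reach (stp s x).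
Proof. by move/(reach_run [:: x]). Qed.

Lemma stp_nil2 (s : state) x : s.2 = set0 -> ord0 \notin (stp s x).1 -> (stp s x).2 = set0.
Proof. by case: s => S T /= ->; rewrite imset0 => /negbTE ->. Qed.

Lemma stp_eq s x S : s.2 = set0 -> (stp s x).1 = S -> ord0 \notin S -> stp s x = (S, set0).
Proof.
move=> H1 H2 H3; rewrite -(@stp_nil2 s x H1); last by rewrite H2.
by rewrite -H2; case: (stp s x).
Qed.

Lemma Sphase j : j <= m'.+1 -> forall P : nat -> bool,
  (forall k, P k -> m'.+2 - j <= k <= m'.+1) ->
  reach ([set q : 'I_m | (nat_of_ord q == m'.+2) || P q], set0).
Proof.
elim: j => [_|j IH lej] P HP.
  have -> : [set q : 'I_m | (nat_of_ord q == m'.+2) || P q] = [set ord_max].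
    apply/setP => q; rewrite !inE -val_eqE /=.
    by case Pq: (P q); rewrite ?orbF ?orbT //; have := HP _ Pq; lia.
  by exists [::].
pose P0 k := (m'.+2 - j <= k <= m'.+1) && P k.-1.
have := IH (ltnW lej) P0; case.
  by move=> k /andP [].
move=> w0 E0.
set s0 := ([set q : 'I_m | (nat_of_ord q == m'.+2) || P0 q], set0) in E0.
pose S1 := [set q : 'I_m | (nat_of_ord q == m'.+1) || (m'.+1 - j <= q <= m') && P q].
have E1 : stp s0 La = (S1, set0).
  apply: stp_eq => //; last by rewrite inE /=; lia.
  apply/setP => q; rewrite stp1 !inE fA_a /P0.
  by have := ltn_ord q; case: ifP => /= /eqP H; lia.
have R1 : reach (S1, set0) by rewrite -E1; apply: reach_stp; exists w0.
case Pm: (P m'.+1).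
  have <- : stp (S1, set0) Lc = ([set q : 'I_m | (nat_of_ord q == m'.+2) || P q], set0).
    apply: stp_eq => //; last by rewrite inE /=; apply/negP => /HP; lia.
    apply/setP => q; rewrite stp1 !inE fA_c.
    have := ltn_ord q; case: ifP => /eqP H; first by rewrite eqxx H.
    case: (eqVneq (nat_of_ord q) m'.+1) => [->|H']; first by rewrite Pm orbT.
    case Pq: (P q); have := HP q; rewrite Pq; lia.
  exact: reach_stp.
have <- : stp (S1, set0) Lb = ([set q : 'I_m | (nat_of_ord q == m'.+2) || P q], set0).
  apply: stp_eq => //; last by rewrite inE /=; apply/negP => /HP; lia.
  apply/setP => q; rewrite stp1 !inE fA_b.
  have := ltn_ord q; case: ifP => /eqP H; first by rewrite H Pm /=; lia.
  case: ifP => /eqP H'; first by rewrite eqxx H'.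
  case Pq: (P q); have := HP q; rewrite Pq; lia.
exact: reach_stp.
Qed.


Lemma inord_max : inord m'.+2 = ord_max :> 'I_m.
Proof. by apply: val_inj => /=; rewrite inordK. Qed.

Lemma reachS0 (S : {set 'I_m}) : ord0 \notin S -> reach (S, set0).
Proof.
move=> S0.
pose P (b : nat) k := (0 < k <= b) && (inord k \in S).
have RP b : b <= m'.+1 -> reach ([set q : 'I_m | (nat_of_ord q == m'.+2) || P b q], set0).
  by move=> hb; apply: (Sphase (leqnn _)) => k /andP [H _]; lia.
have memq (q : 'I_m) : q != ord_max -> q != ord0 ->
   (nat_of_ord q != m'.+2) && (nat_of_ord q != 0).
  by rewrite -!val_eqE /= => -> ->.
case Sm: (ord_max \in S).
  have <- : [set q : 'I_m | (nat_of_ord q == m'.+2) || P m'.+1 q] = S; last exact: RP.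
  apply/setP => q; rewrite inE /P inord_val.
  case: (eqVneq q ord_max) => [->|nm]; first by rewrite /= eqxx Sm.
  case: (eqVneq q ord0) => [->|n0]; first by rewrite /= (negbTE S0).
  by move/andP: (memq q nm n0) => [/eqP h1 /eqP h2]; have := ltn_ord q; case: (q \in S); lia.
case Sm1: (inord m'.+1 \in S).
  have <- : stp ([set q : 'I_m | (nat_of_ord q == m'.+2) || P m' q], set0) Lb = (S, set0).
    apply: stp_eq => //.
    apply/setP => q; rewrite stp1 !inE /P fA_b.
    case: ifP => /eqP H1.
      have -> : q = inord m'.+1 by apply: val_inj => /=; rewrite inordK.
      by rewrite Sm1 eqxx.
    case: ifP => /eqP H2.
      have -> : q = ord_max by apply: val_inj.
      by rewrite Sm /=; lia.
    rewrite inord_val.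
    case: (eqVneq q ord0) => [->|n0]; first by rewrite /= (negbTE S0).
    by move: n0; rewrite -val_eqE /=; have := ltn_ord q; lia.
  by apply: reach_stp; apply: RP.
have <- : stp ([set q : 'I_m | (nat_of_ord q == m'.+2) || P m'.+1 q], set0) Lc = (S, set0).
  apply: stp_eq => //.
  apply/setP => q; rewrite stp1 !inE /P fA_c.
  case: ifP => /eqP H1.
    have -> : q = ord_max by apply: val_inj.
    by rewrite Sm Sm1 /=; lia.
  rewrite inord_val.
  case: (eqVneq q ord0) => [->|n0]; first by rewrite /= (negbTE S0).
  by move: n0; rewrite -val_eqE /=; have := ltn_ord q; lia.
by apply: reach_stp; apply: RP.
Qed.


Lemma stp_d (S : {set 'I_m}) T : ord0 \notin S -> stp (S, T) Ld = (S, gB Ld @: T).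
Proof.
move=> S0; rewrite /stp /=.
have -> : [set q | fA Ld q \in S] = S by apply/setP => q; rewrite inE fA_d.
by rewrite (negbTE S0).
Qed.

Lemma reachT (S : {set 'I_m}) (T : {set 'I_n}) : ord0 \notin S -> S != set0 -> reach (S, T).
Proof.
move=> S0 /set0Pn [p pS].
have p0 : 0 < nat_of_ord p.
  by rewrite lt0n; apply: contraNneq S0 => H; rewrite (_ : ord0 = p) //; apply: val_inj.
suff H : forall k, k <= n -> forall T : {set 'I_n}, (forall t, t \in T -> nat_of_ord t < k) -> reach (S, T).
  by apply: (H n (leqnn _)) => t _; apply: ltn_ord.
elim => [_|k IH lek] {}T HT.
  have -> : T = set0 by apply/setP => t; rewrite inE; apply/negP => /HT.
  exact: reachS0.
pose T0 := [set t : 'I_n | ((nat_of_ord t).+1 < n) && (inord (nat_of_ord t).+1 \in T)].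
have R0 : reach (S, T0).
  apply: (IH (ltnW lek)) => t; rewrite inE => /andP [lt /HT].
  by rewrite inordK.
have E0 : gB Ld @: T0 = T :\ ord0.
  apply/setP => u; rewrite in_img_d !inE -val_eqE /= val_rinv.
  have := ltn_ord u; case: (eqVneq (nat_of_ord u) 0) => [->|un0] /= hu.
    by rewrite ltnn.
  rewrite prednK ?lt0n // hu /= -(inord_val u) //.
  by rewrite inord_val.
have R1 : reach (S, T :\ ord0) by rewrite -E0 -stp_d //; apply: reach_stp.
case T0in: (ord0 \in T); last first.
  suff -> : T = T :\ ord0 by [].
  apply/setP => u; rewrite !inE; case: (eqVneq u ord0) => [->|//].
  by rewrite T0in.
have -> : (S, T) = run (S, T :\ ord0) (nseq m La).
  rewrite /run; set r := foldl _ _ _.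
  have -> : r = (r.1, r.2) by case: r.
  rewrite /r -/(run _ _) runA1 rotS_m.
  rewrite (@runA_add (S, T :\ ord0) m p) /=; last first.
  - by rewrite inE add0n modn_small // inord_val.
  - by rewrite p0 /= ltnW.
  by rewrite setD1K.
exact: reach_run.
Qed.


Lemma setU1_abs (T : finType) (a : T) (A : {set T}) : a \in A -> a |: A = A.
Proof. by move=> H; apply/setP => x; rewrite in_setU1; case: eqP => // ->. Qed.

Lemma img_cc (T : {set 'I_n}) : gB Lc @: (gB Lc @: T) = T.
Proof. by apply/setP => u; rewrite !in_img_c gB_cK. Qed.

Lemma reachE (T : {set 'I_n}) : reach (set0, T).
Proof.
have R := @reachT [set ord_max] (gB Lc @: T).
have -> : (set0, T) = stp ([set ord_max], gB Lc @: T) Lc.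
  rewrite /stp /=.
  have -> : [set q | fA Lc q \in [set ord_max]] = set0 :> {set 'I_m}.
    apply/setP => q; rewrite !inE -val_eqE /= fA_c.
    by have := ltn_ord q; case: ifP => /eqP; lia.
  by rewrite inE img_cc.
apply: reach_stp; apply: R.
  by rewrite inE -val_eqE.
by apply/set0Pn; exists ord_max; rewrite inE.
Qed.

Lemma reachNF (S : {set 'I_m}) (T : {set 'I_n}) (q0 : 'I_m) :
  ord0 \in S -> ord0 \in T -> q0 \notin S -> reach (S, T).
Proof.
move=> S0 T0 q0S.
have q0p : 0 < nat_of_ord q0.
  by rewrite lt0n; apply: contraNneq q0S => H; rewrite (_ : q0 = ord0) //; apply: val_inj.
have R : reach (rotS q0 S, T).
  apply: reachT.
    by rewrite inE add0n modn_small // inord_val.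
  apply/set0Pn; exists (inord (m - q0)); rewrite inE inordK; last by lia.
  rewrite subnK ?modnn; last by apply: ltnW.
  by have -> : inord 0 = ord0 :> 'I_m by apply: val_inj => /=; rewrite inordK.
have -> : (S, T) = run (rotS q0 S, T) (nseq (m - q0) La).
  rewrite /run; set r := foldl _ _ _.
  have -> : r = (r.1, r.2) by case: r.
  rewrite /r -/(run _ _) runA1 rotS_comp subnK ?rotS_m; last by apply: ltnW.
  rewrite (@runA_add (rotS q0 S, T) (m - q0) (m - q0)) /=; last first.
  - by rewrite rotS_comp subnK ?rotS_m //; apply: ltnW.
  - by rewrite leqnn andbT subn_gt0.
  by rewrite setU1_abs.
exact: reach_run.
Qed.

Lemma reachF (T : {set 'I_n}) : ord0 \in T -> reach (setT, T).
Proof.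
move=> T0.
have R : reach ([set~ ord_max], gB Lc @: T).
  apply: (@reachNF _ _ ord_max).
  - by rewrite !inE -val_eqE.
  - rewrite in_img_c; suff -> : gB Lc ord0 = ord0 by [].
    by apply: val_inj => /=; rewrite gB_c.
  - by rewrite !inE eqxx.
have -> : (setT, T) = stp ([set~ ord_max], gB Lc @: T) Lc.
  rewrite /stp /=.
  have -> : [set q | fA Lc q \in [set~ ord_max]] = setT :> {set 'I_m}.
    apply/setP => q; rewrite !inE -val_eqE /= fA_c.
    by have := ltn_ord q; case: ifP => /eqP; lia.
  by rewrite inE img_cc setU1_abs.
exact: reach_stp.
Qed.

Definition valid (s : state) := (ord0 \in s.1) ==> (ord0 \in s.2).

Lemma reach_all s : valid s -> reach s.
Proof.
case: s => S T /=; rewrite /valid /=.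
case S0: (ord0 \in S) => /= H.
  case: (eqVneq S setT) => [->|NS]; first exact: reachF.
  have [q0 Hq] : exists q0, q0 \notin S.
    apply/existsP; apply: contraNT NS => /existsPn HH.
    by apply/eqP/setP => q; rewrite inE; move: (HH q); rewrite negbK.
  exact: (reachNF S0 H Hq).
case: (eqVneq S set0) => [->|NS]; first exact: reachE.
by apply: reachT; rewrite ?S0.
Qed.


Lemma valid_stp' s x : valid (stp s x).
Proof. by apply/implyP; apply: valid_stp. Qed.

Local Notation QT := {s : state | valid s}.
Definition stpQ (q : QT) x : QT := exist _ (stp (val q) x) (valid_stp' (val q) x).
Lemma valid_init : valid init.
Proof. by rewrite /valid /= inE -val_eqE. Qed.
Definition initQ : QT := exist _ init valid_init.

Lemma foldQ w (q : QT) : val (foldl stpQ q w) = run (val q) w.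
Proof. by elim: w q => [|x w IH] q //=; rewrite IH. Qed.

Lemma cset (T : finType) : #|{set T}| = 2 ^ #|T|.
Proof. by rewrite -[LHS]cardsT -powersetT card_powerset cardsT. Qed.

Lemma sub_n0 (T : finType) (a : T) (S : {set T}) : (S \subset [set~ a]) = (a \notin S).
Proof.
apply/subsetP/idP => [H|H x xS]; first by apply/negP => /H; rewrite !inE eqxx.
by rewrite !inE; apply: contraNneq H => <-.
Qed.

Lemma cardQ : #|{: QT}| = 3 * 2 ^ (m + n - 2).
Proof.
rewrite card_sig.
pose A := powerset [set~ (ord0 : 'I_m)].
pose B := powerset [set~ (ord0 : 'I_n)].
have -> : #|[pred x | valid x]| = #|setX A setT :|: setX (~: A) (~: B)|.
  apply: eq_card => [[S T]]; rewrite !inE /valid /A /B /= !sub_n0 !negbK andbT.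
  by case: (ord0 \in S); case: (ord0 \in T).
rewrite cardsU.
have -> : setX A setT :&: setX (~: A) (~: B) = set0.
  apply/setP => [[S T]]; rewrite !inE.
  by rewrite /=; case: (S \subset _).
rewrite cards0 subn0 !cardsX.
have cA (k : nat) : #|powerset [set~ (ord0 : 'I_k.+1)]| = 2 ^ k.
  by rewrite card_powerset cardsC1 card_ord.
have cC (T : finType) (E : {set {set T}}) : #|~: E| = 2 ^ #|T| - #|E|.
  by rewrite -cset -(cardsC E) addKn.
rewrite !cC cardsT !cset !card_ord /A /B !cA.
have -> : m + n - 2 = (m' + n').+4 by lia.
rewrite !expnS expnD.
set a := 2 ^ m'; set b := 2 ^ n'.
nia.
Qed.

Theorem main_thm : state_complexity Lang (3 * 2 ^ (m + n - 2)).
Proof.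
split.
  apply: (@recog_fin QT _ _ stpQ initQ (fun q => acc (val q))); first exact: cardQ.
  by move=> w; rewrite correct foldQ.
rewrite -cardQ.
have W : forall q : QT, exists w, run init w = val q.
  by move=> q; apply: reach_all; exact: (valP q).
pose wd q := proj1_sig (constructive_indefinite_description _ (W q)).
have wdE q : run init (wd q) = val q by rewrite /wd; case: constructive_indefinite_description.
apply: (@lower QT Lang wd) => x y ne.
have [z Hz] : exists z, acc (run (val x) z) <> acc (run (val y) z).
  by apply: distinguish => E; apply: ne; apply: val_inj.
exists z; rewrite !correct !run_cat !wdE => H.
by apply: Hz; apply/idP/idP => /H.
Qed.

End Main.

Theorem theorem5 (m n : nat) (hm : 3 <= m) (hn : 3 <= n) :
  state_complexity (lang_cat (lang_rev (V_abcd m)) (V_dcba n))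
                   (3 * 2 ^ (m + n - 2)).
Proof.
case: m hm => [|[|[|m']]] // _; case: n hn => [|[|[|n']]] // _.
exact: main_thm.
Qed.
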